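(* Let $q\ge2$, $n\ge2$, $X=\{0,\ldots,q-1\}$, and let $\mathcal{L}=\{L_1,\ldots,L_k\}$ be a partition of $X^n$ with respect to which the Insect Markov chain on $X^n$ is lumpable. For each $i$ let $L_i'\subseteq X^{n-1}$ be the set of words obtained by deleting the last letter from the elements of $L_i$, and let $\mathcal{L}'=\{L_1',\ldots,L_h'\}$ be the collection of distinct sets among $L_1',\dots,L_k'$ (which is a partition of $X^{n-1}$). Then the Insect Markov chain on $X^{n-1}$ is lumpable with respect to $\mathcal{L}'$.
   Context: For $m\ge1$ and $x,y\in X^m$, $d(x,y)=m-\max\{\ell\in\{0,\ldots,m\}: x_1\cdots x_\ell=y_1\cdots y_\ell\}$. The Insect Markov chain on $X^m$: set $\alpha_j=\frac{q^j-1}{q^{j+1}-1}$ for $1\le j\le m-1$, $\alpha_m=0$; transition probabilities are $p(x,y)=q^{-1}(1-\alpha_1)+\sum_{i=2}^mq^{-i}\alpha_1\cdots\alpha_{i-1}(1-\alpha_i)$ if $d(x,y)\in\{0,1\}$, and $p(x,y)=\sum_{i=j}^mq^{-i}\alpha_1\cdots\alpha_{i-1}(1-\alpha_i)$ if $d(x,y)=j>1$. A chain is lumpable with respect to a partition if for all parts $L,L'$ the map $x\mapsto\sum_{y\in L'}p(x,y)$ is constant on $L$. *)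

(* Defs.v *)
From HB Require Import structures.
From mathcomp Require Import all_boot all_order all_algebra.
Set Implicit Arguments. Unset Strict Implicit. Unset Printing Implicit Defensive.
Import Order.TTheory GRing.Theory Num.Theory.

Definition word (q m : nat) := {ffun 'I_m -> 'I_q}.

Definition lcp (q m : nat) (x y : word q m) : nat :=
  \max_(l < m.+1 | [forall i : 'I_m, (i < l) ==> (x i == y i)]) (l : nat).

Definition dist (q m : nat) (x y : word q m) : nat := m - lcp x y.

Local Open Scope ring_scope.

Definition alpha (R : realFieldType) (q m j : nat) : R :=
  if (j < m)%N then ((q%:R ^+ j - 1) / (q%:R ^+ j.+1 - 1)) else 0.

Definition insect_term (R : realFieldType) (q m i : nat) : R :=
  (q%:R ^+ i)^-1 * (\prod_(1 <= k < i) alpha R q m k) * (1 - alpha R q m i).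

Definition insect_p (R : realFieldType) (q m : nat) (x y : word q m) : R :=
  let j := dist x y in
  if (j <= 1)%N then
    (q%:R)^-1 * (1 - alpha R q m 1) + \sum_(2 <= i < m.+1) insect_term R q m i
  else \sum_(j <= i < m.+1) insect_term R q m i.

Definition insect_lumpable (R : realFieldType) (q m : nat)
    (P : {set {set word q m}}) : Prop :=
  forall L L' : {set word q m}, L \in P -> L' \in P ->
  forall x y : word q m, x \in L -> y \in L ->
    \sum_(z in L') insect_p R x z = \sum_(z in L') insect_p R y z.

Definition delete_last (q n : nat) (x : word q n) : word q n.-1 :=
  [ffun i : 'I_n.-1 => x (widen_ord (leq_pred n) i)].

Definition proj_partition (q n : nat) (P : {set {set word q n}})
  : {set {set word q n.-1}} :=
  [set [set delete_last x | x in L] | L : {set word q n} in P].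

(* Main.v *)
Require Import Defs.
From HB Require Import structures.
From mathcomp Require Import all_boot all_order all_algebra.
From mathcomp Require Import ring lra zify.
Set Implicit Arguments. Unset Strict Implicit. Unset Printing Implicit Defensive.
Import Order.TTheory GRing.Theory Num.Theory.
Local Open Scope ring_scope.

Section Abs.
Variables (R : realFieldType) (T : Type).

Definition Ssum (a g : nat -> R) m :=
  \sum_(i < m) a i * \sum_(j < m) a j * g (maxn i j).

Lemma SsumS a g m : Ssum a g m.+1 =
  Ssum a g m + a m * g m * (2 * \sum_(i < m) a i + a m).
Proof.
rewrite /Ssum big_ord_recr /=.
have -> : \sum_(i < m) a i * \sum_(j < m.+1) a j * g (maxn i j) =
   \sum_(i < m) a i * \sum_(j < m) a j * g (maxn i j) + \sum_(i < m) a i * (a m * g m).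
  rewrite -big_split /=; apply: eq_bigr => i _.
  rewrite big_ord_recr /= -mulrDr; congr (_ * (_ + _)).
  by rewrite (maxn_idPr (ltnW (ltn_ord i))).
rewrite big_ord_recr /= maxnn.
have -> : \sum_(j < m) a j * g (maxn m j) = \sum_(j < m) a j * g m.
  by apply: eq_bigr => j _; rewrite (maxn_idPl (ltnW (ltn_ord j))).
rewrite -!mulr_suml.
set s := \sum_(i < m) a i. ring.
Qed.

Lemma dsum (a g : nat -> R) r :
  Ssum a g r.+1 - a 0 * \sum_(i < r.+1) a i * g i
  = \sum_(k < r) (a k.+1 * (a k.+1 + 2 * \sum_(i < k.+1) a i - a 0)) * g k.+1.
Proof.
elim: r => [|r IH].
  by rewrite /Ssum !big_ord1 big_ord0 maxnn subrr.
rewrite SsumS [in RHS]big_ord_recr /= -IH.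
set s := \sum_(i < r.+1) a i.
rewrite [\sum_(i < r.+2) _]big_ord_recr /=. ring.
Qed.

Variable U : (T -> R) -> Prop.
Hypothesis Uadd : forall f g, U f -> U g -> U (fun x => f x + g x).
Hypothesis Uscale : forall c f, U f -> U (fun x => c * f x).
Hypothesis Uext : forall f g, f =1 g -> U f -> U g.
Hypothesis U0 : U (fun _ => 0).

Lemma Usum r (c : 'I_r -> R) (psi : 'I_r -> T -> R) :
  (forall k, U (psi k)) -> U (fun x => \sum_(k < r) c k * psi k x).
Proof.
elim: r c psi => [|r IH] c psi Hp.
  by apply: Uext U0 => x; rewrite big_ord0.
apply: (Uext (f := fun x => \sum_(k < r) c (widen_ord (leqnSn r) k) * psi (widen_ord (leqnSn r) k) x
   + c ord_max * psi ord_max x)).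
  by move=> x; rewrite big_ord_recr.
apply: Uadd; first exact: IH.
exact: Uscale.
Qed.

Lemma abs_key m (P : nat -> (T -> R) -> (T -> R)) (a : nat -> R) :
  (forall i f g, f =1 g -> P i f =1 P i g) ->
  (forall i r (c : 'I_r -> R) (psi : 'I_r -> T -> R) x,
     P i (fun y => \sum_(k < r) c k * psi k y) x = \sum_(k < r) c k * P i (psi k) x) ->
  (forall i j f x, (i < m)%N -> (j < m)%N -> P i (P j f) x = P (maxn i j) f x) ->
  (forall i, (i < m)%N -> 0 < a i) ->
  (forall f, U f -> U (fun x => \sum_(i < m) a i * P i f x)) ->
  forall i f, (i < m)%N -> U f -> U (P i f).
Proof.
elim: m P a => [|m IH] P a Pext Plin Prel Apos HA i f //.
pose e k := a k.+1 * (a k.+1 + 2 * \sum_(i < k.+1) a i - a 0).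
have IH' : forall i f, (i < m)%N -> U f -> U (P i.+1 f).
  apply: (IH (fun k => P k.+1) e).
  - by move=> k; apply: Pext.
  - by move=> k; apply: Plin.
  - by move=> i0 j0 g x Hi Hj; rewrite Prel // maxnSS.
  - move=> k Hk; rewrite /e; apply: mulr_gt0; first exact: Apos.
    rewrite big_ord_recl /=.
    have : 0 <= \sum_(i < k) a (bump 0 i).
      apply: sumr_ge0 => i0 _; apply: ltW; apply: Apos.
      rewrite /bump /=; apply: leq_ltn_trans (ltn_ord i0) _.
      by apply: leq_trans Hk.
    have := Apos k.+1 Hk; have := Apos 0%N isT; lra.
  - move=> g Ug.
    pose Ag := fun x => \sum_(i < m.+1) a i * P i g x.
    have UAg : U Ag by exact: HA.
    have UAAg := HA _ UAg.
    have UE : U (fun x => \sum_(i < m.+1) a i * P i Ag x + (- a 0) * Ag x).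
      by apply: Uadd => //; apply: Uscale.
    apply: Uext UE => x.
    have H1 : forall i : 'I_m.+1, P i Ag x = \sum_(j < m.+1) a j * P (maxn i j) g x.
      move=> i0; rewrite /Ag Plin; apply: eq_bigr => j _.
      by rewrite Prel.
    under eq_bigr => i0 _ do rewrite H1.
    have := dsum a (fun k => P k g x) m.
    rewrite /Ssum /Ag => <-. ring.
case: i => [|i] Hi Uf; last exact: IH'.
pose Af := fun x => \sum_(i < m.+1) a i * P i f x.
have UAf : U Af by exact: HA.
have U2 : U (fun x => (a 0)^-1 * (Af x + (-1) * \sum_(k < m) a k.+1 * P k.+1 f x)).
  apply: Uscale; apply: Uadd => //; apply: Uscale.
  apply: (@Usum m (fun k : 'I_m => a k.+1) (fun k : 'I_m => P k.+1 f)) => k.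
  exact: IH'.
apply: Uext U2 => x.
rewrite /Af big_ord_recl /=.
have a0 := Apos 0%N isT.
have -> : \sum_(i < m) a (bump 0 i) * P (bump 0 i) f x = \sum_(k < m) a k.+1 * P k.+1 f x by [].
field. by rewrite gt_eqF.
Qed.

End Abs.
Local Close Scope ring_scope.

Section Words.
Variables (q m : nat).
Implicit Types x y z : word q m.

Definition agree x z (k : nat) := [forall i : 'I_m, (i < k) ==> (x i == z i)].

Lemma lcp_le x z : lcp x z <= m.
Proof. by apply/bigmax_leqP => l _; rewrite -ltnS. Qed.

Lemma lcp_geP x z k : k <= m -> (k <= lcp x z) = agree x z k.
Proof.
move=> km; apply/idP/idP.
  rewrite /lcp.
  have nz : 0 < #|[pred l : 'I_m.+1 | [forall i : 'I_m, (i < l) ==> (x i == z i)]]|.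
    by apply/card_gt0P; exists ord0; rewrite inE; apply/forallP.
  have [l0 Hl0 ->] := @eq_bigmax_cond _ _ (fun l : 'I_m.+1 => val l) nz.
  move=> kl; apply/forallP => i; apply/implyP => ik.
  by move: Hl0 => /forallP /(_ i) /implyP; apply; apply: leq_trans kl.
move=> Ha.
have kl : k < m.+1 by [].
exact: (@leq_bigmax_cond _ _ (fun l : 'I_m.+1 => val l) (Ordinal kl)).
Qed.

Lemma dist_le x z j : (dist x z <= j) = agree x z (m - j).
Proof. by rewrite /dist leq_subCl lcp_geP // leq_subr. Qed.

Lemma agreeP x z k : reflect (forall i : 'I_m, i < k -> x i = z i) (agree x z k).
Proof.
apply: (iffP forallP) => H i.
  by move=> ik; move: (H i); rewrite ik => /eqP.
by apply/implyP => /H ->.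
Qed.

Lemma agree_sym x z k : agree x z k = agree z x k.
Proof. by apply/agreeP/agreeP => H i /H ->. Qed.

Lemma agree_trans x y z k : agree x y k -> agree y z k -> agree x z k.
Proof. by move=> /agreeP H1 /agreeP H2; apply/agreeP => i ik; rewrite H1 // H2. Qed.

Lemma agree_mono x z k k' : k' <= k -> agree x z k -> agree x z k'.
Proof.
move=> kk /agreeP H; apply/agreeP => i ik; apply: H; exact: leq_trans ik kk.
Qed.

Lemma dist_sym x z j : (dist x z <= j) = (dist z x <= j).
Proof. by rewrite !dist_le agree_sym. Qed.

Lemma dist_ultra x y z i j : dist x y <= i -> dist y z <= j ->
  dist x z <= maxn i j.
Proof.
rewrite !dist_le => H1 H2; apply: agree_trans.
  apply: agree_mono H1; apply: leq_sub2l; exact: leq_maxl.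
apply: agree_mono H2; apply: leq_sub2l; exact: leq_maxr.
Qed.

Lemma card_agree x k : k <= m -> #|[pred z : word q m | agree x z k]| = q ^ (m - k).
Proof.
move=> km.
pose F := fun i : 'I_m => if i < k then [pred y | y == x i] else [pred y : 'I_q | true].
have -> : #|[pred z : word q m | agree x z k]| = #|family F|.
  apply: eq_card => z; rewrite !inE; apply/agreeP/familyP => H i.
    rewrite /F; case: ifP => ik //=; by rewrite inE (H i ik).
  by move=> ik; move: (H i); rewrite /F ik inE => /eqP.
rewrite card_family foldrE big_map big_enum /=.
rewrite (eq_bigr (fun i : 'I_m => if i < k then 1 else q)); last first.
  by move=> i _; rewrite /F; case: ifP => _; [rewrite card1 | rewrite card_ord].
rewrite -(big_mkord xpredT (fun i => if i < k then 1 else q)).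
rewrite (@big_cat_nat _ _ _ k 0 m _ _ (leq0n k) km) /=.
rewrite big_nat_cond (eq_bigr (fun _ => 1)); last first.
  by move=> i /andP[/andP[_ ->]].
rewrite big1_eq mul1n big_nat_cond (eq_bigr (fun _ => q)); last first.
  by move=> i /andP[/andP[]]; rewrite leqNgt => /negbTE ->.
by rewrite -big_nat_cond prod_nat_const_nat.
Qed.

Lemma card_ball x j : j <= m -> #|[pred z : word q m | dist x z <= j]| = q ^ j.
Proof.
move=> jm.
transitivity #|[pred z : word q m | agree x z (m - j)]|.
  by apply: eq_card => z; rewrite !inE dist_le.
by rewrite card_agree ?leq_subr // subKn.
Qed.

End Words.

Section Ops.
Variables (R : realFieldType) (q m : nat).
Hypothesis hq : (0 < q)%N.
Local Open Scope ring_scope.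

Definition Bop (j : nat) (f : word q m -> R) (x : word q m) : R :=
  \sum_(z | (dist x z <= j)%N) f z.
Definition Pop (j : nat) (f : word q m -> R) (x : word q m) : R :=
  (q%:R ^+ j)^-1 * Bop j f x.

Lemma sum_ball (x : word q m) j (c : R) : (j <= m)%N ->
  \sum_(z | (dist x z <= j)%N) c = (q ^ j)%:R * c.
Proof.
move=> jm; rewrite sumr_const.
have -> : #|[pred z | (dist x z <= j)%N]| = (q ^ j)%N by rewrite card_ball.
by rewrite mulr_natl.
Qed.

Lemma Bop_rel i j f x : (i <= m)%N -> (j <= m)%N ->
  Bop i (Bop j f) x = (q ^ minn i j)%:R * Bop (maxn i j) f x.
Proof.
move=> im jm; rewrite /Bop.
case: (leqP i j) => ij.
  rewrite (eq_bigr (fun _ => \sum_(w | (dist x w <= j)%N) f w)); last first.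
    move=> z dz; apply: eq_bigl => w; apply/idP/idP => H.
      by have := dist_ultra dz H; rewrite (maxn_idPr ij).
    rewrite dist_sym in dz.
    by have := dist_ultra dz H; rewrite (maxn_idPr ij).
  exact: sum_ball.
have ji := ltnW ij.
rewrite big_mkcond /=.
rewrite (eq_bigr (fun z => \sum_w (if (dist x z <= i)%N then (if (dist z w <= j)%N then f w else 0) else 0))); last first.
  by move=> z _; case: ifP => _; [rewrite big_mkcond | rewrite big1].
rewrite exchange_big /= [in RHS]big_mkcond mulr_sumr.
apply: eq_bigr => w _.
case: ifP => dw.
  rewrite (eq_bigr (fun z => if (dist w z <= j)%N then f w else 0)); last first.
    move=> z _; rewrite [(dist w z <= j)%N]dist_sym.
    case dz' : (dist z w <= j)%N; case dz : (dist x z <= i)%N => //.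
    rewrite dist_sym in dz'.
    by have := dist_ultra dw dz'; rewrite (maxn_idPl ji) dz.
  by rewrite -big_mkcond sum_ball.
rewrite mulr0; apply: big1 => z _; case: ifP => dz //; case: ifP => dz' //.
have := dist_ultra dz dz'; rewrite (maxn_idPl ji) dw //.
Qed.

Lemma qpos : (0 : R) < q%:R.
Proof. by rewrite ltr0n. Qed.

Lemma Pop_rel i j f x : (i <= m)%N -> (j <= m)%N ->
  Pop i (Pop j f) x = Pop (maxn i j) f x.
Proof.
move=> im jm; rewrite /Pop.
have -> : Bop i (fun z => (q%:R ^+ j)^-1 * Bop j f z) x = (q%:R ^+ j)^-1 * Bop i (Bop j f) x.
  by rewrite /Bop mulr_sumr.
rewrite Bop_rel // natrX.
have q0 : (q%:R : R) != 0 by rewrite gt_eqF // qpos.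
case: (leqP i j) => ij.
  by field; rewrite ?expf_neq0.
by field; rewrite ?expf_neq0.
Qed.

Lemma Pop_ext i f g : f =1 g -> Pop i f =1 Pop i g.
Proof. by move=> fg x; rewrite /Pop /Bop; congr (_ * _); apply: eq_bigr => z _. Qed.

Lemma Pop_lin i r (c : 'I_r -> R) (psi : 'I_r -> word q m -> R) x :
  Pop i (fun y => \sum_(k < r) c k * psi k y) x = \sum_(k < r) c k * Pop i (psi k) x.
Proof.
rewrite /Pop /Bop exchange_big mulr_sumr; apply: eq_bigr => k _.
by rewrite -mulr_sumr mulrCA.
Qed.

End Ops.
Local Open Scope ring_scope.

Lemma dist_leq_m q m (x z : word q m) : (dist x z <= m)%N.
Proof. exact: leq_subr. Qed.

Lemma insect_p_sum (R : realFieldType) q m (x z : word q m) : (1 <= m)%N ->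
  insect_p R x z = \sum_(1 <= j < m.+1) (if (dist x z <= j)%N then insect_term R q m j else 0).
Proof.
move=> m1; rewrite /insect_p /=.
have dm := dist_leq_m x z.
case: ifP => d1.
  rewrite [RHS]big_ltn // d1.
  congr (_ + _); last first.
    rewrite big_nat_cond [RHS]big_nat_cond; apply: eq_bigr => j /andP[/andP[j2 _] _].
    by rewrite (leq_trans d1 (ltnW j2)).
  rewrite /insect_term big_geq // expr1 mulr1 //.
rewrite [RHS](@big_cat_nat _ _ _ (dist x z) 1 m.+1) /=; last 2 first.
- by apply: ltnW; rewrite ltnNge d1.
- by apply: leq_trans dm _.
rewrite [X in _ = X + _]big_nat_cond [X in _ = X + _]big1 ?add0r; last first.
  by move=> j /andP[/andP[_ jd] _]; rewrite leqNgt jd.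
rewrite big_nat_cond [RHS]big_nat_cond; apply: eq_bigr => j /andP[/andP[dj _] _].
by rewrite dj.
Qed.

Lemma alpha_bounds (R : realFieldType) q m k : (2 <= q)%N -> (1 <= k)%N -> (k < m)%N ->
  0 < alpha R q m k < 1.
Proof.
move=> q2 k1 km; rewrite /alpha km.
have Q2 : (2 : R) <= q%:R by rewrite ler_nat.
have u1 : (1 : R) < q%:R ^+ k.
  by rewrite exprn_egt1; [rewrite -lt0n | lra].
rewrite exprS.
set u := q%:R ^+ k in u1 *.
have h : u < q%:R * u by nra.
apply/andP; split.
  by apply: divr_gt0; nra.
rewrite ltr_pdivrMr; nra.
Qed.

Lemma term_pos (R : realFieldType) q m j : (2 <= q)%N -> (1 <= j)%N -> (j <= m)%N ->
  0 < insect_term R q m j.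
Proof.
move=> q2 j1 jm; rewrite /insect_term.
have Q0 : (0 : R) < q%:R by rewrite ltr0n; apply: leq_trans q2.
apply: mulr_gt0; first apply: mulr_gt0.
- by rewrite invr_gt0 exprn_gt0.
- rewrite big_nat_cond; apply: prodr_gt0 => k /andP[/andP[k1 kj] _].
  by have /andP[] := alpha_bounds R q2 k1 (leq_trans kj jm).
case: (ltnP j m) => jm'.
  by have /andP[_ ] := alpha_bounds R q2 j1 jm'; rewrite subr_gt0.
by rewrite /alpha ltnNge jm' /= subr0 ltr01.
Qed.

Section Del.
Variables (q m : nat).

Lemma agree_del (x z : word q m.+1) k : (k <= m)%N ->
  agree (delete_last x) (delete_last z) k = agree x z k.
Proof.
move=> km; apply/agreeP/agreeP => H i ik.
  have im : (i < m)%N by apply: leq_trans ik km.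
  have := H (Ordinal im) ik; rewrite !ffunE.
  by have -> : widen_ord (leq_pred m.+1) (Ordinal im) = i by apply: val_inj.
by rewrite !ffunE; apply: H.
Qed.

Lemma dist_del (x z : word q m.+1) j :
  (dist (delete_last x) (delete_last z) <= j)%N = (dist x z <= j.+1)%N.
Proof. by rewrite !dist_le subSS agree_del // leq_subr. Qed.

Lemma dist0 n (x z : word q n) : (dist x z <= 0)%N = (x == z).
Proof.
rewrite dist_le subn0; apply/agreeP/eqP => [H|-> //].
by apply/ffunP => i; apply: H.
Qed.

Lemma del_eq (x z : word q m.+1) :
  (delete_last x == delete_last z) = (dist x z <= 1)%N.
Proof. by rewrite -dist0 dist_del. Qed.

Definition ext (w : word q m) (c : 'I_q) : word q m.+1 :=
  [ffun i : 'I_m.+1 => if unlift ord_max i is Some j then w j else c].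

Lemma del_ext w c : delete_last (ext w c) = w.
Proof.
apply/ffunP => i; rewrite !ffunE.
have ne : ord_max != widen_ord (leq_pred m.+1) i.
  by rewrite -val_eqE /= neq_ltn ltn_ord orbT.
case: (unliftP ord_max (widen_ord (leq_pred m.+1) i)) => [j Ej|E].
  congr (w _); apply: val_inj => /=.
  move: Ej => /(congr1 val) /=; rewrite /bump.
  by rewrite leqNgt (ltn_ord j) add0n => ->.
by rewrite E eqxx in ne.
Qed.

Lemma fiber_sum (R : realFieldType) (c : 'I_q) (g : word q m -> R) :
  \sum_(z : word q m.+1) g (delete_last z) = q%:R * \sum_(w : word q m) g w.
Proof.
rewrite (partition_big (fun z : word q m.+1 => (delete_last z : word q m)) xpredT) //=.
rewrite mulr_sumr; apply: eq_bigr => w _.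
rewrite (eq_bigl (fun z => (dist (ext w c) z <= 1)%N)); last first.
  by move=> z /=; rewrite -del_eq del_ext eq_sym.
rewrite (eq_bigr (fun _ => g w)); last first.
  by move=> z; rewrite -del_eq del_ext => /eqP <-.
by rewrite sum_ball // expn1.
Qed.

End Del.
Local Open Scope ring_scope.

Theorem lemma14 (R : realFieldType) (q n : nat) (P : {set {set word q n}}) :
  (2 <= q)%N -> (2 <= n)%N ->
  partition P [set: word q n] ->
  insect_lumpable R P ->
  partition (proj_partition P) [set: word q n.-1] /\
  insect_lumpable R (proj_partition P).
Proof.
move=> q2.
case: n P => [|m] P n2 Ppart Hl //.
have m1 : (1 <= m)%N by [].
have q0 : (0 < q)%N by apply: leq_trans q2.
pose c0 : 'I_q := Ordinal q0.
move: Ppart => /and3P[/eqP Pcov PtI P0].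
pose U := fun f : word q m.+1 -> R =>
  forall L, L \in P -> forall x y, x \in L -> y \in L -> f x = f y.
pose a := fun k : nat => insect_term R q m.+1 k.+1 * q%:R ^+ k.+1.
have qnz : (q%:R : R) != 0 by rewrite pnatr_eq0 -lt0n.
have Aform : forall (f : word q m.+1 -> R) (x : word q m.+1), \sum_z insect_p R x z * f z = \sum_(k < m.+1) a k * Pop k.+1 f x.
  move=> f x.
  under eq_bigr => z _ do rewrite insect_p_sum // mulr_suml.
  rewrite exchange_big /= big_add1 /= big_mkord.
  apply: eq_bigr => k _; rewrite /a /Pop /Bop mulrA mulfK ?expf_neq0 //.
  rewrite [in RHS]big_mkcond mulr_sumr; apply: eq_bigr => z _.
  by case: ifP; rewrite ?mul0r ?mulr0.
have Hsum : forall g : word q m.+1 -> R, \sum_z g z = \sum_(L in P) \sum_(z in L) g z.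
  by move=> g; rewrite -big_trivIset // Pcov; apply: eq_bigl => z; rewrite inE.
have HA : forall f, U f -> U (fun x => \sum_(k < m.+1) a k * Pop k.+1 f x).
  move=> f Uf L0 HL0 x y Hx Hy; rewrite -!Aform !Hsum; apply: eq_bigr => L HL.
  case: (set_0Vmem L) => [->|[z0 Hz0]]; first by rewrite !big_set0.
  rewrite (eq_bigr (fun z => insect_p R x z * f z0)); last first.
    by move=> z Hz; rewrite (Uf L HL z z0).
  rewrite [RHS](eq_bigr (fun z => insect_p R y z * f z0)); last first.
    by move=> z Hz; rewrite (Uf L HL z z0).
  by rewrite -!mulr_suml (Hl L0 L HL0 HL x y Hx Hy).
have UP : forall k f, (k < m.+1)%N -> U f -> U (Pop k.+1 f).
  move=> k f km Uf.
  apply: (@abs_key R _ U _ _ _ _ m.+1 (fun k => Pop k.+1) a) => //.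
  - by move=> g h Ug Uh L HL x y Hx Hy; rewrite (Ug L HL x y) // (Uh L HL x y).
  - by move=> c g Ug L HL x y Hx Hy; rewrite (Ug L HL x y).
  - by move=> g h gh Ug L HL x y Hx Hy; rewrite -!gh (Ug L HL x y).
  - by move=> i; apply: Pop_ext.
  - by move=> i; apply: Pop_lin.
  - by move=> i j g x Hi Hj; rewrite Pop_rel // maxnSS.
  - move=> i Hi; apply: mulr_gt0; first exact: term_pos.
    by rewrite exprn_gt0 // ltr0n.
have UB : forall j f, (1 <= j <= m.+1)%N -> U f -> U (Bop j f).
  move=> [|k] f //= km Uf L HL x y Hx Hy.
  have := UP k f km Uf L HL x y Hx Hy; rewrite /Pop.
  by move/(mulfI (invr_neq0 (expf_neq0 k.+1 qnz))).
pose ind := fun (L : {set word q m.+1}) z => if z \in L then (1:R) else 0.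
have Uind : forall L, L \in P -> U (ind L).
  move=> L HL L0 HL0 x y Hx Hy; rewrite /ind.
  case: (eqVneq L0 L) => [<-|ne]; first by rewrite Hx Hy.
  have dj := trivIsetP PtI L0 L HL0 HL ne.
  by rewrite (disjointFr dj Hx) (disjointFr dj Hy).
have projP : forall (L : {set word q m.+1}) (x : word q m.+1), (delete_last x \in [set delete_last z | z in L]) = (Bop 1 (ind L) x != 0).
  move=> L x; rewrite /Bop /ind -big_mkcondr sumr_const pnatr_eq0 -lt0n.
  apply/imsetP/card_gt0P => [[z Hz E]|[z]].
    by exists z; rewrite unfold_in; apply/andP; split => //; rewrite -del_eq E.
  by rewrite unfold_in => /andP[dz Hz]; exists z => //; apply/eqP; rewrite del_eq.
have UB1 : forall L, L \in P -> U (Bop 1 (ind L)).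
  by move=> L HL; apply: UB => //; apply: Uind.
have key : forall L1 L2, L1 \in P -> L2 \in P -> forall x y, x \in L1 -> y \in L2 ->
    delete_last x = delete_last y -> [set delete_last z | z in L1] \subset [set delete_last z | z in L2].
  move=> L1 L2 H1 H2 x y Hx Hy Exy; apply/subsetP => v /imsetP[z Hz ->].
  rewrite projP (UB1 L2 H2 L1 H1 z x Hz Hx) -projP Exy; exact: imset_f.
split.
- apply/and3P; split.
  + apply/eqP/setP => w; rewrite in_setT; apply/bigcupP.
    have : ext w c0 \in cover P by rewrite Pcov in_setT.
    move=> /bigcupP[L HL Hz]; exists ([set delete_last z | z in L]); first by apply/imsetP; exists L.
    by rewrite -(del_ext w c0); apply: imset_f.
  + apply/trivIsetP => A B /imsetP[L1 HL1 ->] /imsetP[L2 HL2 ->] neq.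
    apply/pred0P => w /=; apply/negbTE/negP => /andP[/imsetP[x Hx Ex] /imsetP[y Hy Ey]].
    move/negP: neq; apply; rewrite eqEsubset; apply/andP; split.
      by apply: (key _ _ HL1 HL2 x y) => //; rewrite -Ex -Ey.
    by apply: (key _ _ HL2 HL1 y x) => //; rewrite -Ex -Ey.
  + apply/imsetP => [[L HL E]].
    case: (set_0Vmem L) => [L0|[x Hx]]; first by move: HL; rewrite L0 (negbTE P0).
    by have := imset_f (fun z => delete_last z) Hx; rewrite -E inE.
move=> A B /imsetP[L0 HL0 ->] /imsetP[L HL ->] u v /imsetP[x Hx ->] /imsetP[y Hy ->].
pose psi := fun z : word q m.+1 => if delete_last z \in [set delete_last z | z in L] then (1:R) else 0.
have Upsi : U psi.
  by move=> L1 HL1 x1 y1 H1 H2; rewrite /psi !projP (UB1 L HL L1 HL1 x1 y1 H1 H2).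
have form : forall x1 : word q m.+1,
    \sum_(w in [set delete_last z | z in L]) insect_p R (delete_last x1) w =
    (q%:R)^-1 * \sum_(j < m) insect_term R q m j.+1 * Bop j.+2 psi x1.
  move=> x1; rewrite big_mkcond /=.
  rewrite -[LHS](mulKf qnz) -(@fiber_sum q m R c0); congr (_ * _).
  rewrite (eq_bigr (fun z => psi z * \sum_(1 <= j < m.+1)
      (if (dist x1 z <= j.+1)%N then insect_term R q m j else 0))); last first.
    move=> z _; rewrite /psi insect_p_sum //; case: ifP => _; rewrite ?mul1r ?mul0r //.
    by apply: eq_bigr => j _; rewrite dist_del.
  under eq_bigr => z _ do rewrite mulr_sumr.
  rewrite exchange_big /= big_add1 /= big_mkord.
  apply: eq_bigr => j _; rewrite /Bop [in RHS]big_mkcond mulr_sumr; apply: eq_bigr => z _.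
  by case: ifP; rewrite ?mulr0 ?mul0r // mulrC.
rewrite !form; congr (_ * _); apply: eq_bigr => j _; congr (_ * _).
have jm : (1 <= j.+2 <= m.+1)%N by rewrite /= ltnS (ltn_ord j).
exact: (UB j.+2 psi jm Upsi L0 HL0 x y Hx Hy).
Qed.
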